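(* Let $S$ be a nondegenerate $n$-dimensional simplex with $S\subset Q_n\subset nS$. Then replacing any vertex of $S$ by an arbitrary point of $Q_n$ yields a simplex whose volume does not exceed $\mathrm{vol}(S)$.
   Context: $Q_n=[0,1]^n$. $nS$ denotes the image of $S$ under the homothety with center at the center of gravity of $S$ and ratio $n$. *)

(* Defs.v *)
From HB Require Import structures.
From mathcomp Require Import all_boot all_order all_algebra.
From mathcomp Require Import reals.
Set Implicit Arguments. Unset Strict Implicit. Unset Printing Implicit Defensive.
Import Order.TTheory GRing.Theory Num.Theory.
Local Open Scope ring_scope.

(* Points of R^n are row vectors 'rV[R]_n; an n-dimensional simplex is given
   by its n+1 vertices v : 'I_n.+1 -> 'rV[R]_n. *)

Definition in_cube (R : realType) (n : nat) (x : 'rV[R]_n) : Prop :=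
  forall i : 'I_n, 0 <= x ord0 i <= 1.

Definition in_simplex (R : realType) (n : nat) (v : 'I_n.+1 -> 'rV[R]_n)
    (x : 'rV[R]_n) : Prop :=
  exists l : 'I_n.+1 -> R,
    (forall i, 0 <= l i) /\ \sum_i l i = 1 /\ x = \sum_i l i *: v i.

Definition centroid (R : realType) (n : nat) (v : 'I_n.+1 -> 'rV[R]_n) : 'rV[R]_n :=
  (n.+1%:R)^-1 *: \sum_i v i.

Definition in_homothetic (R : realType) (n : nat) (k : R)
    (v : 'I_n.+1 -> 'rV[R]_n) (x : 'rV[R]_n) : Prop :=
  exists y, in_simplex v y /\ x = centroid v + k *: (y - centroid v).

(* The (n+1)x(n+1) vertex matrix: row i is (v_i, 1). *)
Definition vertex_mx (R : realType) (n : nat) (v : 'I_n.+1 -> 'rV[R]_n)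
    : 'M[R]_n.+1 :=
  \matrix_(i < n.+1, j < n.+1)
     (if unlift ord_max j is Some k then v i ord0 k else 1).

Definition nondeg_simplex (R : realType) (n : nat) (v : 'I_n.+1 -> 'rV[R]_n) : Prop :=
  \det (vertex_mx v) != 0.

Definition simplex_vol (R : realType) (n : nat) (v : 'I_n.+1 -> 'rV[R]_n) : R :=
  `|\det (vertex_mx v)| / (n`!)%:R.

Definition replace_vertex (R : realType) (n : nat) (v : 'I_n.+1 -> 'rV[R]_n)
    (j : 'I_n.+1) (x : 'rV[R]_n) : 'I_n.+1 -> 'rV[R]_n :=
  fun i => if i == j then x else v i.

(* Main.v *)
Require Import Defs.
From HB Require Import structures.
From mathcomp Require Import all_boot all_order all_algebra.
From mathcomp Require Import reals ring lra.
Import Order.TTheory GRing.Theory Num.Theory.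
Local Open Scope ring_scope.
Lemma det_replace (F : fieldType) (m : nat) (A : 'M[F]_m) (j : 'I_m) (y : 'rV[F]_m) :
  A \in unitmx ->
  \det (\matrix_(i, k) if i == j then y 0 k else A i k) = (y *m invmx A) 0 j * \det A.
Proof.
move=> uA.
have -> : invmx A = (\det A)^-1 *: \adj A by rewrite /invmx uA.
rewrite (expand_det_row _ j) [(y *m _) 0 j]mxE.
rewrite big_distrl /=; apply: eq_bigr => k _.
rewrite !mxE eqxx /= -!mulrA; congr (_ * _).
have dA : \det A != 0 by rewrite -unitfE -unitmxE.
rewrite [RHS](_ : _ = (-1) ^+ (j + k) * \det (row' j (col' k A))); last by field.
rewrite /cofactor; congr (_ * \det _); apply/matrixP => a b; rewrite !mxE.
by rewrite eq_sym (negbTE (neq_lift j a)).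
Qed.
Lemma aux_le (R : realFieldType) (l a : R) : 0 <= a <= 1 -> l * a <= Num.max l 0.
Proof.
move=> /andP[a0 a1]; have [h|h] := lerP 0 l.
  nra.
nra.
Qed.

Lemma core (R : realFieldType) (n : nat) (A L : 'M[R]_n.+1) :
 L *m A = 1%:M -> A *m L = 1%:M ->
 (forall i, A i ord_max = 1) ->
 (forall i k, 0 <= A i k <= 1) ->
 (forall y : 'rV[R]_n.+1, y 0 ord_max = 1 -> (forall k, 0 <= y 0 k <= 1) ->
     forall i, (1 - n%:R) / (n.+1)%:R <= (y *m L) 0 i) ->
 forall y : 'rV[R]_n.+1, y 0 ord_max = 1 -> (forall k, 0 <= y 0 k <= 1) ->
   forall j, (y *m L) 0 j <= 1.
Proof.
move=> LA AL Amax A01 low y ymax y01 j.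
have E1 k : \sum_i L k i = if k == ord_max then 1 else 0.
  have := congr1 (fun M : 'M[R]_n.+1 => M k ord_max) LA; rewrite !mxE.
  under eq_bigr do rewrite Amax mulr1.
  by move=> ->; case: (k == ord_max).
have E2 i : \sum_k A i k * L k i = 1.
  by have := congr1 (fun M : 'M[R]_n.+1 => M i i) AL; rewrite !mxE eqxx.
pose yi (i : 'I_n.+1) : 'rV[R]_n.+1 :=
  \row_k (if k == ord_max then 1 else if L k i < 0 then 1 else 0).
pose p i := \sum_k yi i 0 k * L k i.
have pE i : p i = (yi i *m L) 0 i by rewrite mxE.
pose t k i := if k == ord_max then 0 else Num.max (L k i) 0 - L k i * A i k.
have t0 k i : 0 <= t k i.
  rewrite /t; case: eqP => // _; rewrite subr_ge0; exact: aux_le.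
have E3 i : \sum_k t k i = \sum_k L k i - 1 - p i + L ord_max i.
  rewrite -(E2 i) /p.
  have -> : L ord_max i = \sum_k (if k == ord_max then L k i else 0).
    by rewrite -big_mkcond big_pred1_eq.
  rewrite -!sumrB -big_split /=; apply: eq_bigr => k _.
  rewrite /t mxE; case: eqP => [->|_]; first by rewrite Amax; ring.
  have [h|h] := ltrP (L k i) 0.
    ring.
  ring.
have Sp : 1 - n%:R <= \sum_i p i.
  have : \sum_(i < n.+1) ((1 - n%:R) / n.+1%:R) <= \sum_i p i.
    apply: ler_sum => i _; rewrite pE; apply: low.
      by rewrite mxE eqxx.
    by move=> k; rewrite mxE; case: ifP => _; [|case: ifP => _]; apply/andP; split; lra.
  rewrite sumr_const card_ord; suff -> : (1 - n%:R) / n.+1%:R *+ n.+1 = 1 - n%:R :> R by [].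
  have hn : n.+1%:R != 0 :> R by rewrite pnatr_eq0.
  by rewrite -mulr_natr divfK.
have Tot : \sum_i \sum_k t k i <= 0.
  rewrite (eq_bigr _ (fun i _ => E3 i)) big_split /= !sumrB.
  rewrite exchange_big /= (eq_bigr _ (fun k _ => E1 k)) -big_mkcond big_pred1_eq.
  rewrite (E1 ord_max) eqxx sumr_const card_ord.
  move: Sp; rewrite [n.+1%:R]mulrS; lra.
have Tj : \sum_k t k j <= 0.
  apply: le_trans Tot; rewrite [X in _ <= X](bigD1 j) //= lerDl; apply: sumr_ge0 => i _.
  by apply: sumr_ge0 => k _.
rewrite -subr_le0; apply: le_trans Tj.
have -> : (y *m L) 0 j - 1 = \sum_k (y 0 k - A j k) * L k j.
  by rewrite mxE -(E2 j) -sumrB; apply: eq_bigr => k _; ring.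
apply: ler_sum => k _; rewrite /t; case: eqP => [->|_].
  by rewrite ymax Amax subrr mul0r.
rewrite mulrBl [A j k * _]mulrC lerD // ?lexx // mulrC; exact: aux_le.
Qed.

Definition ext {R : realType} {n : nat} (x : 'rV[R]_n) : 'rV[R]_n.+1 :=
  \row_k (if unlift ord_max k is Some k' then x 0 k' else 1).

Lemma ext_max (R : realType) (n : nat) (x : 'rV[R]_n) : ext x 0 ord_max = 1.
Proof. by rewrite mxE unlift_none. Qed.

Lemma cube_ext (R : realType) (n : nat) (x : 'rV[R]_n) :
  in_cube x -> forall k, 0 <= ext x 0 k <= 1.
Proof.
move=> cx k; rewrite mxE; case: unliftP => [k' _|_]; first by have := cx k'; rewrite [ord0]ord1.
by rewrite ler01 lexx.
Qed.

Lemma ext_surj (R : realType) (n : nat) (y : 'rV[R]_n.+1) :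
  y 0 ord_max = 1 -> (forall k, 0 <= y 0 k <= 1) ->
  exists x : 'rV[R]_n, in_cube x /\ ext x = y.
Proof.
move=> ym y01; exists (\row_k y 0 (lift ord_max k)); split.
  by move=> k; rewrite mxE.
apply/matrixP => a k; rewrite [a]ord1 !mxE; case: unliftP => [k' ->|->].
  by rewrite mxE.
by rewrite ym.
Qed.

Lemma vertex_mxE (R : realType) (n : nat) (v : 'I_n.+1 -> 'rV[R]_n) i k :
  vertex_mx v i k = ext (v i) 0 k.
Proof. by rewrite !mxE. Qed.

Lemma hom (R : realType) (n : nat) (v : 'I_n.+1 -> 'rV[R]_n) (x : 'rV[R]_n) :
  in_homothetic n%:R v x -> exists w : 'rV[R]_n.+1,
   ext x = w *m vertex_mx v /\ forall i, (1 - n%:R) / n.+1%:R <= w 0 i.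
Proof.
move=> [y [[mu [mu0 [smu ->]]] ->]].
exists (\row_i ((1 - n%:R) / n.+1%:R + n%:R * mu i)); split; last first.
  move=> i; rewrite mxE lerDl; apply: mulr_ge0 => //; exact: ler0n.
apply/matrixP => a k; rewrite [a]ord1 !mxE.
under [RHS]eq_bigr do rewrite !mxE.
case: unliftP => [k' _|_] /=.
  rewrite /centroid !mxE !summxE.
  have -> : \sum_(k0 < n.+1) (mu k0 *: v k0) 0 k' = \sum_i mu i * v i ord0 k'.
    by apply: eq_bigr => i _; rewrite mxE.
  under [RHS]eq_bigr => i _ do rewrite mulrDl -mulrA.
  rewrite big_split /= -!big_distrr /=.
  have hn : n.+1%:R != 0 :> R by rewrite pnatr_eq0.
  have -> : \sum_k0 v k0 0 k' = \sum_i v i ord0 k' by [].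
  rewrite [n.+1%:R]mulrS in hn *.
  by field.
under eq_bigr do rewrite mulr1.
rewrite big_split /= -[\sum_(i < n.+1) n%:R * mu i]big_distrr /= smu sumr_const card_ord.
have hn : n.+1%:R != 0 :> R by rewrite pnatr_eq0.
rewrite -(mulr_natr ((1 - n%:R) / n.+1%:R)) divfK //; ring.
Qed.

Theorem mainTheorem4 (R : realType) (n : nat) (v : 'I_n.+1 -> 'rV[R]_n) :
  nondeg_simplex v ->
  (forall x, in_simplex v x -> in_cube x) ->
  (forall x, in_cube x -> in_homothetic n%:R v x) ->
  forall (j : 'I_n.+1) (x : 'rV[R]_n), in_cube x ->
    simplex_vol (replace_vertex v j x) <= simplex_vol v.
Proof.
move=> nd hin hcube j x cx.
set A := vertex_mx v.
have uA : A \in unitmx by rewrite unitmxE unitfE.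
have Erep : vertex_mx (replace_vertex v j x) =
    \matrix_(i, k) if i == j then ext x 0 k else A i k.
  by apply/matrixP => i k; rewrite !mxE /replace_vertex; case: (i == j).
have Amax i : A i ord_max = 1 by rewrite mxE unlift_none.
have A01 i k : 0 <= A i k <= 1.
  rewrite vertex_mxE; apply: cube_ext; apply: hin.
  exists (fun i' => (i' == i)%:R); split; first by move=> i'; exact: ler0n.
  split; first by rewrite (bigD1 i) //= eqxx big1 ?addr0 // => i' /negbTE ->.
  rewrite (bigD1 i) //= eqxx scale1r big1 ?addr0 // => i' /negbTE ->.
  by rewrite scale0r.
have low : forall y : 'rV[R]_n.+1, y 0 ord_max = 1 -> (forall k, 0 <= y 0 k <= 1) ->
     forall i, (1 - n%:R) / (n.+1)%:R <= (y *m invmx A) 0 i.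
  move=> y ym y01 i; have [x' [cx' <-]] := @ext_surj R n y ym y01.
  have [w [-> hw]] := @hom R n v x' (hcube _ cx').
  by rewrite -mulmxA mulmxV // mulmx1.
have up := @core R n A (invmx A) (mulVmx uA) (mulmxV uA) Amax A01 low.
rewrite /simplex_vol Erep det_replace // normrM.
have hb : `|(ext x *m invmx A) 0 j| <= 1.
  rewrite ler_norml; apply/andP; split.
    apply: (le_trans _ (low _ (@ext_max R n x) (@cube_ext R n x cx) j)).
    rewrite ler_pdivlMr ?ltr0Sn // [n.+1%:R]mulrS; have := ler0n R n; lra.
  exact: up (ext x) (@ext_max R n x) (@cube_ext R n x cx) j.
rewrite ler_wpM2r // ?invr_ge0 ?ler0n //.
exact: ler_piMl.
Qed.
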